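(* Let $M=\langle W,\leq,R,V\rangle$ be a brIML1-model, let $\gamma$ be a formula such that $w\nVdash\gamma$ for some $w\in W$, let $\Sigma$ be the set of all subformulas of $\gamma$, and let $M_\Sigma=\langle W_\Sigma,\leq_\Sigma,R_\Sigma,V_\Sigma\rangle$ be the filtered model. Then for every $w\in W$ and every $\alpha\in\Sigma$: $w\Vdash_M\alpha$ iff $[w]\Vdash_{M_\Sigma}\alpha$.
   Context: Formulas are built from a denumerable set $PV$ of propositional variables and $\bot$ using $\land,\lor,\rightarrow$ and unary $\Delta$. A brIML1-model $\langle W,\leq,R,V\rangle$: $W$ non-empty, $\leq$ a partial order, $R$ a binary relation with ($w\leq v\Rightarrow wRv$) and ($w\leq v$, $vRu$ $\Rightarrow wRu$), $V:PV\to P(W)$ upward closed under $\leq$. Forcing: atoms via $V$; $\bot$ never; $\land,\lor$ pointwise; $w\Vdash\varphi\rightarrow\psi$ iff every $v\geq w$ has $v\nVdash\varphi$ or $v\Vdash\psi$; $w\Vdash\Delta\varphi$ iff every $v$ with $wRv$ has $v\Vdash\varphi$. Filtration: $w\sim v$ iff $w,v$ force the same formulas of $\Sigma$; $[w]$ the class of $w$; $W_\Sigma=\{[w]:w\in W\}$; $[w]\leq_\Sigma[v]$ iff every $\alpha\in\Sigma$ forced at $w$ is forced at $v$; $[w]R_\Sigma[v]$ iff for every $\Delta\beta\in\Sigma$, $w\Vdash\Delta\beta$ implies $v\Vdash\beta$; $V_\Sigma(q)=\{[w]:w\in V(q)\}$ if $q\in\Sigma$ and $V_\Sigma(q)=\emptyset$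 if $q\notin\Sigma$. Forcing in $M_\Sigma$ is bi-relational forcing with respect to $\leq_\Sigma,R_\Sigma,V_\Sigma$. *)

(* Defs.v *)
Set Implicit Arguments.

Inductive form : Type :=
| Var : nat -> form
| Bot : form
| And : form -> form -> form
| Or : form -> form -> form
| Imp : form -> form -> form
| Delta : form -> form.

Fixpoint force (W : Type) (le R : W -> W -> Prop) (V : nat -> W -> Prop)
  (w : W) (phi : form) {struct phi} : Prop :=
  match phi with
  | Var q => V q w
  | Bot => False
  | And a b => force le R V w a /\ force le R V w b
  | Or a b => force le R V w a \/ force le R V w b
  | Imp a b => forall v, le w v -> ~ force le R V v a \/ force le R V v b
  | Delta a => forall v, R w v -> force le R V v a
  end.

Definition brIML1_model (W : Type) (le R : W -> W -> Prop) (V : nat -> W -> Prop) : Prop :=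
  inhabited W /\
  (forall w, le w w) /\
  (forall w v, le w v -> le v w -> w = v) /\
  (forall w v u, le w v -> le v u -> le w u) /\
  (forall w v, le w v -> R w v) /\
  (forall w v u, le w v -> R v u -> R w u) /\
  (forall q w v, V q w -> le w v -> V q v).

Fixpoint subformula (a g : form) : Prop :=
  a = g \/
  match g with
  | Var _ | Bot => False
  | And b c | Or b c | Imp b c => subformula a b \/ subformula a c
  | Delta b => subformula a b
  end.

Section Filtration.
Variables (W : Type) (le R : W -> W -> Prop) (V : nat -> W -> Prop) (Sigma : form -> Prop).

Let frc := force le R V.

Definition sim (w v : W) : Prop := forall a, Sigma a -> (frc w a <-> frc v a).

Definition cls (w : W) : W -> Prop := fun v => sim w v.

Definition WS : Type := { C : W -> Prop | exists w, C = cls w }.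

Definition leS (C D : WS) : Prop :=
  exists w v, proj1_sig C = cls w /\ proj1_sig D = cls v /\
    (forall a, Sigma a -> frc w a -> frc v a).

Definition RS (C D : WS) : Prop :=
  exists w v, proj1_sig C = cls w /\ proj1_sig D = cls v /\
    (forall b, Sigma (Delta b) -> frc w (Delta b) -> frc v b).

Definition VS (q : nat) (C : WS) : Prop :=
  Sigma (Var q) /\ exists w, V q w /\ proj1_sig C = cls w.

Definition clsS (w : W) : WS := exist _ (cls w) (ex_intro _ w eq_refl).

Definition forceS (C : WS) (a : form) : Prop := force leS RS VS C a.

End Filtration.
Arguments forceS : clear implicits.
Arguments clsS : clear implicits.

(* Main.v *)
Require Import Defs.
From Stdlib Require Import Classical ProofIrrelevance.

Lemma sub_refl a : subformula a a.
Proof. destruct a; simpl; left; reflexivity. Qed.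

Lemma sub_trans a b c : subformula a b -> subformula b c -> subformula a c.
Proof.
  intros Hab. induction c; simpl; intros H; destruct H as [H|H];
    try (subst; exact Hab); try contradiction; simpl; right;
    try (destruct H as [H|H]; [left; auto | right; auto]); auto.
Qed.

Lemma persist W (le R : W -> W -> Prop) V :
  brIML1_model le R V -> forall a w v, le w v -> force le R V w a -> force le R V v a.
Proof.
  intros (_ & Hr & _ & Ht & Hlr & Hcomp & Hv).
  induction a; simpl; intros w v Hwv H; eauto.
  - destruct H; split; eauto.
  - destruct H; [left|right]; eauto.
Qed.

Theorem theorem5p4 (W : Type) (le R : W -> W -> Prop) (V : nat -> W -> Prop)
  (gamma : form) :
  brIML1_model le R V ->
  (exists w, ~ force le R V w gamma) ->
  forall (w : W) (a : form), subformula a gamma ->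
    (force le R V w a <->
     forceS W le R V (fun b => subformula b gamma)
       (clsS W le R V (fun b => subformula b gamma) w) a).
Proof.
  intros HM _.
  set (S := fun b => subformula b gamma).
  assert (Hcls : forall w1 w2, cls le R V S w1 = cls le R V S w2 ->
     forall a, S a -> (force le R V w1 a <-> force le R V w2 a)).
  { intros w1 w2 E. assert (H : cls le R V S w2 w2) by (intros b _; tauto).
    rewrite <- E in H. exact H. }
  assert (Hrep : forall (D : WS le R V S) v, proj1_sig D = cls le R V S v ->
            D = clsS W le R V S v).
  { intros [P pf] v E; simpl in E; subst P. unfold clsS. f_equal. apply proof_irrelevance. }
  destruct HM as [Hinh [Hr [Has [Ht [Hlr [Hcomp Hv]]]]]] eqn:HMe.
  assert (Hpers := @persist W le R V HM).
  intros w a. revert w. fold S.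
  induction a; intros w Hs; unfold forceS; simpl.
  - unfold VS. split.
    + intros H. split; [exact Hs|]. exists w. split; auto.
    + intros [_ [w' [H E]]]. simpl in E. symmetry in E. exact (proj1 (Hcls w' w E (Var n) Hs) H).
  - tauto.
  - assert (HA1 : S a1) by (eapply sub_trans; [|exact Hs]; simpl; right; left; apply sub_refl).
    assert (HA2 : S a2) by (eapply sub_trans; [|exact Hs]; simpl; right; right; apply sub_refl).
    rewrite (IHa1 w), (IHa2 w); auto. unfold forceS; tauto.
  - assert (HA1 : S a1) by (eapply sub_trans; [|exact Hs]; simpl; right; left; apply sub_refl).
    assert (HA2 : S a2) by (eapply sub_trans; [|exact Hs]; simpl; right; right; apply sub_refl).
    rewrite (IHa1 w), (IHa2 w); auto. unfold forceS; tauto.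
  - assert (HA1 : S a1) by (eapply sub_trans; [|exact Hs]; simpl; right; left; apply sub_refl).
    assert (HA2 : S a2) by (eapply sub_trans; [|exact Hs]; simpl; right; right; apply sub_refl).
    split.
    + intros H D [w1 [v [E1 [E2 Hf]]]].
      rewrite (Hrep D v E2).
      destruct (classic (forceS W le R V S (clsS W le R V S v) a1)) as [Ha|Ha]; [right|left; auto].
      change (forceS W le R V S (clsS W le R V S v) a2).
      apply IHa1 in Ha; auto. apply IHa2; auto.
      assert (Hi : force le R V v (Imp a1 a2)).
      { apply Hf; auto. simpl in E1. apply (Hcls w w1 E1 _ Hs). exact H. }
      simpl in Hi. destruct (Hi v (Hr v)); tauto.
    + intros H v Hwv.
      destruct (classic (force le R V v a1)) as [Ha|Ha]; [right|left; auto].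
      assert (Hle : @leS W le R V S (clsS W le R V S w) (clsS W le R V S v)).
      { exists w, v. simpl. split; [reflexivity|split;[reflexivity|]].
        intros b _ Hb. eapply Hpers; eauto. }
      destruct (H _ Hle) as [Hn|Hb].
      * exfalso; apply Hn. apply (IHa1 v); auto.
      * apply (IHa2 v); auto.
  - assert (HA : S a) by (eapply sub_trans; [|exact Hs]; simpl; right; apply sub_refl).
    split.
    + intros H D [w1 [v [E1 [E2 Hf]]]].
      rewrite (Hrep D v E2).
      change (forceS W le R V S (clsS W le R V S v) a).
      apply IHa; auto. apply Hf; auto. simpl in E1.
      apply (Hcls w w1 E1 _ Hs). exact H.
    + intros H v Hwv.
      assert (HR : @RS W le R V S (clsS W le R V S w) (clsS W le R V S v)).
      { exists w, v. simpl. split; [reflexivity|split;[reflexivity|]].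
        intros b _ Hb. apply Hb; auto. }
      apply (IHa v); auto. apply H; auto.
Qed.
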